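(* Let $X$ be a closed connected topological manifold, $\pi:P\to X$ a principal circle bundle, and $\gamma:X\to X$ a homeomorphism of order $r$ inducing the identity on $H^1(X;\mathbb{Z})$ and satisfying $\gamma^*P\simeq P$. If $\kappa,\kappa':P\to P$ are two principal bundle automorphisms lifting $\gamma$, then $[\kappa^r]\otimes 1=[(\kappa')^r]\otimes1$ in $H^1(X;\mathbb{Z})\otimes_{\mathbb{Z}}\mathbb{Z}/r$. (Thus $c^r(\gamma,P):=[\kappa^r]\otimes 1$ does not depend on the choice of $\kappa$.)
   Context: $S^1=\mathbb{R}/\mathbb{Z}$ and $\theta\in H^1(S^1;\mathbb{Z})$ is the standard generator; the homotopy class of a map $h:X\to S^1$ is identified with $[h]:=h^*\theta\in H^1(X;\mathbb{Z})$. A gauge transformation $\mu:P\to P$ (bundle automorphism covering the identity) satisfies $\mu(p)=p\cdot h_\mu(\pi(p))$ for a unique continuous $h_\mu:X\to S^1$, and one sets $[\mu]:=[h_\mu]$. If $\kappa$ lifts $\gamma$, then $\kappa^r$ lifts $\gamma^r=\mathrm{Id}_X$ and is a gauge transformation. *)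

(* Defs.v *)
From HB Require Import structures.
From mathcomp Require Import all_boot all_order all_algebra.
From mathcomp Require Import all_classical all_reals all_analysis.
From mathcomp Require Import ring.
Set Implicit Arguments. Unset Strict Implicit. Unset Printing Implicit Defensive.
Import Order.TTheory GRing.Theory Num.Theory.
Import numFieldNormedType.Exports.
Local Open Scope classical_set_scope.
Local Open Scope ring_scope.

Section Circle.
Variable R : realType.

(* The circle group S^1 = R/Z, realized (isomorphically, as a topological
   group) as the unit circle in R x R with complex multiplication. *)
Definition circle_set : set (R * R) := [set z | z.1 ^+ 2 + z.2 ^+ 2 = 1].
Definition S1 := set_type circle_set.

Definition cmulR (z w : R * R) : R * R :=
  (z.1 * w.1 - z.2 * w.2, z.1 * w.2 + z.2 * w.1).

Lemma cmulR_circle (z w : S1) : cmulR (val z) (val w) \in circle_set.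
Proof.
case: z => [[a b] Hz]; case: w => [[c d] Hw] /=.
move/set_mem: Hz => Hz; move/set_mem: Hw => Hw.
apply/mem_set; rewrite /circle_set /cmulR /=.
move: Hz Hw; rewrite /circle_set /= => Hz Hw.
have -> : (a * c - b * d) ^+ 2 + (a * d + b * c) ^+ 2
        = (a ^+ 2 + b ^+ 2) * (c ^+ 2 + d ^+ 2) by ring.
by rewrite Hz Hw mulr1.
Qed.

Definition cmul (z w : S1) : S1 := exist _ (cmulR (val z) (val w)) (cmulR_circle z w).

Lemma cone_circle : ((1 : R), (0 : R)) \in circle_set.
Proof. by apply/mem_set; rewrite /circle_set /= expr0n /= addr0 expr1n. Qed.

Definition cone : S1 := exist _ (1, 0) cone_circle.

Lemma cinv_circle (z : S1) : ((val z).1, - (val z).2) \in circle_set.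
Proof.
case: z => [[a b] Hz] /=; move/set_mem: Hz => Hz; apply/mem_set.
by move: Hz; rewrite /circle_set /= sqrrN.
Qed.

Definition cinv (z : S1) : S1 := exist _ ((val z).1, - (val z).2) (cinv_circle z).

Definition cpow (z : S1) (n : nat) : S1 := iter n (cmul z) cone.

End Circle.

Definition homotopic (R : realType) (X Y : topologicalType) (f g : X -> Y) : Prop :=
  exists H : X -> R -> Y,
    {within [set z : X * R | 0 <= z.2 <= 1], continuous (fun z : X * R => H z.1 z.2)} /\
    (forall x, H x 0 = f x) /\ (forall x, H x 1 = g x).

Definition locally_euclidean (R : realType) (X : topologicalType) (n : nat) : Prop :=
  forall x : X, exists U : set X, [/\ open U, U x &
    exists V : set 'rV[R]_n, open V /\
    exists (f : X -> 'rV[R]_n) (g : 'rV[R]_n -> X),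
      [/\ {within U, continuous f}, {within V, continuous g}, f @` U = V,
          (forall y, U y -> g (f y) = y) & (forall v, V v -> f (g v) = v)]].

Definition closed_connected_manifold (R : realType) (X : topologicalType) : Prop :=
  [/\ hausdorff_space X, @second_countable X, compact [set: X], connected [set: X]
    & exists n, locally_euclidean R X n].

Definition homeomorphism (X Y : topologicalType) (f : X -> Y) : Prop :=
  continuous f /\ exists g : Y -> X, [/\ continuous g, cancel f g & cancel g f].

Definition principal_circle_bundle (R : realType) (X P : topologicalType)
  (pi : P -> X) (act : P -> S1 R -> P) : Prop :=
  [/\ continuous pi, (forall x, exists p, pi p = x),
      continuous (fun z : P * S1 R => act z.1 z.2),
      [/\ (forall p, act p (cone R) = p),
         (forall p a b, act (act p a) b = act p (cmul a b)) &
         (forall p a, pi (act p a) = pi p)] &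
      (* local triviality: an S^1-equivariant homeomorphism
         U x S^1 ~ pi^-1(U), (x, a) |-> act (s x) a, with inverse p |-> (pi p, psi p) *)
      forall x : X, exists U : set X, [/\ open U, U x &
        exists (s : X -> P) (psi : P -> S1 R),
          [/\ {within U, continuous s}, (forall y, U y -> pi (s y) = y),
              {within pi @^-1` U, continuous psi},
              (forall p, U (pi p) -> act (s (pi p)) (psi p) = p) &
              (forall y a, U y -> psi (act (s y) a) = a)]]].

Definition bundle_aut_lifting (R : realType) (X P : topologicalType)
  (pi : P -> X) (act : P -> S1 R -> P) (gamma : X -> X) (kappa : P -> P) : Prop :=
  [/\ homeomorphism kappa,
      (forall p a, kappa (act p a) = act (kappa p) a) &
      (forall p, pi (kappa p) = gamma (pi p))].

(* gamma^* P ~ P as principal bundles over X, where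
   gamma^* P = {(x, p) | gamma x = pi p} with action on the second factor. *)
Definition pullback_iso (R : realType) (X P : topologicalType)
  (pi : P -> X) (act : P -> S1 R -> P) (gamma : X -> X) : Prop :=
  let E := [set z : X * P | gamma z.1 = pi z.2] in
  exists (F : X * P -> P) (G : P -> X * P),
    [/\ {within E, continuous F}, continuous G /\ (forall p, E (G p)),
        (forall p, F (G p) = p) /\ (forall z, E z -> G (F z) = z),
        (forall z, E z -> pi (F z) = z.1) &
        (forall z a, E z -> F (z.1, act z.2 a) = act (F z) a)].

(* Main.v *)
Require Import Defs.
From HB Require Import structures.
From mathcomp Require Import all_boot all_order all_algebra.
From mathcomp Require Import all_classical all_reals all_analysis.
From mathcomp Require Import ring.
Import Order.TTheory GRing.Theory Num.Theory.
Import numFieldNormedType.Exports.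
Local Open Scope classical_set_scope.
Local Open Scope ring_scope.

Section S1alg.
Variable R : realType.
Implicit Types z w u : S1 R.

Lemma S1_eq z w : val z = val w -> z = w.
Proof. by move=> h; apply: val_inj. Qed.

Lemma S1_norm z : (val z).1 ^+ 2 + (val z).2 ^+ 2 = 1.
Proof. case: z => [x hx] /=; by have := set_mem hx. Qed.

Lemma cmulA z w u : cmul z (cmul w u) = cmul (cmul z w) u.
Proof. apply: S1_eq; rewrite /= /cmulR /=; congr pair; ring. Qed.

Lemma cmulC z w : cmul z w = cmul w z.
Proof. apply: S1_eq; rewrite /= /cmulR /=; congr pair; ring. Qed.

Lemma cmul1z z : cmul (cone R) z = z.
Proof. apply: S1_eq; case: z => [[a b] ?]; rewrite /= /cmulR /=; congr pair; ring. Qed.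

Lemma cmulz1 z : cmul z (cone R) = z.
Proof. by rewrite cmulC cmul1z. Qed.

Lemma cmulVz z : cmul (cinv z) z = cone R.
Proof.
apply: S1_eq; have := S1_norm z; case: z => [[a b] ?] /= hn.
rewrite /cmulR /=; congr pair; last by ring.
by rewrite -hn; ring.
Qed.

Lemma cmulzV z : cmul z (cinv z) = cone R.
Proof. by rewrite cmulC cmulVz. Qed.

Lemma cinvM z w : cinv (cmul z w) = cmul (cinv z) (cinv w).
Proof. apply: S1_eq; rewrite /= /cmulR /=; congr pair; ring. Qed.

Lemma cinv1 : cinv (cone R) = cone R.
Proof. by apply: S1_eq; rewrite /= oppr0. Qed.

Lemma cmulI z w u : cmul z w = cmul z u -> w = u.
Proof.
move=> h; by rewrite -[w]cmul1z -(cmulVz z) -cmulA h cmulA cmulVz cmul1z.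
Qed.

Lemma cpowS z n : cpow z n.+1 = cmul z (cpow z n).
Proof. by []. Qed.

Lemma cpow0 z : cpow z 0 = cone R.
Proof. by []. Qed.

End S1alg.
Arguments S1_eq {R}.
Arguments S1_norm {R}.
Arguments cmulA {R}.
Arguments cmulC {R}.
Arguments cmul1z {R}.
Arguments cmulz1 {R}.
Arguments cmulVz {R}.
Arguments cmulzV {R}.
Arguments cinvM {R}.
Arguments cmulI {R}.
Arguments cpowS {R}.
Arguments cpow0 {R}.

Section S1top.
Variable R : realType.
Variable T : topologicalType.
Implicit Types f g : T -> S1 R.

Lemma S1_contP_at {f x} :
  {for x, continuous (fun t => val (f t))} -> {for x, continuous f}.
Proof.
move=> cf U [?/= [[W oW <-]]] /= Wsfz /filterS; apply; apply: cf.
exact: open_nbhs_nbhs.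
Qed.

Lemma val_cont_at {f x} : {for x, continuous f} -> {for x, continuous (fun t => val (f t))}.
Proof.
move=> cf; apply: (@continuous_comp _ _ _ f (fun z : S1 R => val z)); first exact: cf.
exact: initial_continuous.
Qed.

Lemma cont_fst_at {F : T -> R * R} {x} :
  {for x, continuous F} -> {for x, continuous (fun t => (F t).1)}.
Proof. move=> cf; apply: (@continuous_comp _ _ _ F fst); [exact: cf|exact: cvg_fst]. Qed.

Lemma cont_snd_at {F : T -> R * R} {x} :
  {for x, continuous F} -> {for x, continuous (fun t => (F t).2)}.
Proof. move=> cf; apply: (@continuous_comp _ _ _ F snd); [exact: cf|exact: cvg_snd]. Qed.

Lemma cont_pair_at {F G : T -> R} {x} :
  {for x, continuous F} -> {for x, continuous G} -> {for x, continuous (fun t => (F t, G t))}.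
Proof. move=> cf cg; exact: (cvg_pair cf cg). Qed.

Lemma contM_at {F G : T -> R} {x} :
  {for x, continuous F} -> {for x, continuous G} -> {for x, continuous (fun t => F t * G t)}.
Proof. move=> cf cg; exact: (@continuousM R T F G x cf cg). Qed.
Lemma contB_at {F G : T -> R} {x} :
  {for x, continuous F} -> {for x, continuous G} -> {for x, continuous (fun t => F t - G t)}.
Proof. move=> cf cg; exact: (@continuousB R R^o T F G x cf cg). Qed.
Lemma contD_at {F G : T -> R} {x} :
  {for x, continuous F} -> {for x, continuous G} -> {for x, continuous (fun t => F t + G t)}.
Proof. move=> cf cg; exact: (@continuousD R R^o T F G x cf cg). Qed.
Lemma contN_at {F : T -> R} {x} :
  {for x, continuous F} -> {for x, continuous (fun t => - F t)}.
Proof. move=> cf; exact: (@continuousN R R^o T F x cf). Qed.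

Lemma cmul_cont_at {f g x} :
  {for x, continuous f} -> {for x, continuous g} -> {for x, continuous (fun t => cmul (f t) (g t))}.
Proof.
move=> cf cg; apply: S1_contP_at => /=.
have vf := val_cont_at cf; have vg := val_cont_at cg.
have f1 := cont_fst_at vf; have f2 := cont_snd_at vf.
have g1 := cont_fst_at vg; have g2 := cont_snd_at vg.
rewrite /cmulR; apply: cont_pair_at.
  by apply: contB_at; apply: contM_at.
by apply: contD_at; apply: contM_at.
Qed.

Lemma cinv_cont_at {f x} :
  {for x, continuous f} -> {for x, continuous (fun t => cinv (f t))}.
Proof.
move=> cf; apply: S1_contP_at => /=.
have vf := val_cont_at cf.
apply: cont_pair_at; first exact: cont_fst_at.
apply: contN_at; exact: cont_snd_at.
Qed.

Lemma cmul_cont f g :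
  continuous f -> continuous g -> continuous (fun t => cmul (f t) (g t)).
Proof. move=> cf cg x; exact: (cmul_cont_at (cf x) (cg x)). Qed.

Lemma cinv_cont f : continuous f -> continuous (fun t => cinv (f t)).
Proof. move=> cf x; exact: (cinv_cont_at (cf x)). Qed.

End S1top.
Arguments cmul_cont_at {R T f g x}.
Arguments cinv_cont_at {R T f x}.
Arguments cmul_cont {R T f g}.
Arguments cinv_cont {R T f}.

Fixpoint prodS (R : realType) (F : nat -> S1 R) (n : nat) : S1 R :=
  match n with 0 => cone R | n.+1 => cmul (F n) (@prodS R F n) end.
Arguments prodS {R} F n.

Section prodS_lemmas.
Variable R : realType.

Lemma eq_prodS (F G : nat -> S1 R) n : (forall i, (i < n)%N -> F i = G i) -> prodS F n = prodS G n.
Proof.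
elim: n => [//|n IH] h /=; rewrite h // IH // => i hi; apply: h; exact: ltnW.
Qed.

Lemma prodS_cinv (F : nat -> S1 R) n : cinv (prodS F n) = prodS (fun i => cinv (F i)) n.
Proof. elim: n => [|n IH] /=; [exact: cinv1 | by rewrite cinvM IH]. Qed.

Lemma prodS_cst (z : S1 R) n : prodS (fun=> z) n = cpow z n.
Proof. by elim: n => [|n IH] //=; rewrite IH. Qed.

Lemma prodS_cont (T : topologicalType) (F : nat -> T -> S1 R) n :
  (forall i, continuous (F i)) -> continuous (fun t => prodS (fun i => F i t) n).
Proof.
move=> hF; elim: n => [|n IH] /=; first exact: cst_continuous.
exact: cmul_cont.
Qed.

End prodS_lemmas.

Section Bundle.
Variables (R : realType) (X P : topologicalType) (pi : P -> X) (act : P -> S1 R -> P).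
Hypothesis hb : principal_circle_bundle pi act.

Lemma actM p a b : act (act p a) b = act p (cmul a b).
Proof. by case: hb => _ _ _ [_ h _] _; apply: h. Qed.

Lemma pi_act p a : pi (act p a) = pi p.
Proof. by case: hb => _ _ _ [_ _ h] _; apply: h. Qed.

Lemma act_free p a b : act p a = act p b -> a = b.
Proof.
case: hb => _ _ _ _ /(_ (pi p)) [U [oU Ux [s [psi [_ spi _ hs hpsi]]]]] e.
have hp : act (s (pi p)) (psi p) = p by apply: hs.
have : psi (act (s (pi p)) (cmul (psi p) a)) = psi (act (s (pi p)) (cmul (psi p) b)).
  by rewrite -!actM hp e.
rewrite !hpsi //; exact: cmulI.
Qed.

Lemma act_trans p q : pi p = pi q -> exists c, q = act p c.
Proof.
case: hb => _ _ _ _ /(_ (pi p)) [U [oU Ux [s [psi [_ spi _ hs hpsi]]]]] e.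
have hp : act (s (pi p)) (psi p) = p by apply: hs.
have hq : act (s (pi q)) (psi q) = q by apply: hs; rewrite -e.
exists (cmul (cinv (psi p)) (psi q)).
by rewrite -{1}hp actM cmulA cmulzV cmul1z e hq.
Qed.

End Bundle.
Arguments actM {R X P pi act} hb p a b.
Arguments pi_act {R X P pi act} hb p a.
Arguments act_free {R X P pi act} hb {p a b}.
Arguments act_trans {R X P pi act} hb {p q}.

Section Lift.
Variables (R : realType) (X P : topologicalType) (pi : P -> X) (act : P -> S1 R -> P).
Variables (gamma : X -> X) (kappa kappa' : P -> P).
Hypothesis hb : principal_circle_bundle pi act.
Hypothesis hgc : continuous gamma.
Hypothesis hk : bundle_aut_lifting pi act gamma kappa.
Hypothesis hk' : bundle_aut_lifting pi act gamma kappa'.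

Lemma exists_phi : exists phi : X -> S1 R,
  continuous phi /\ forall q, kappa' q = act (kappa q) (phi (pi q)).
Proof.
have [cpi surj _ _ triv] := hb.
have [[ck _] keq kpi] := hk.
have [_ k'eq k'pi] := hk'.
have H1 : forall x, exists c, exists p, pi p = x /\ kappa' p = act (kappa p) c.
  move=> x; have [p hp] := surj x.
  have e : pi (kappa p) = pi (kappa' p) by rewrite kpi k'pi.
  have [c hc] := act_trans hb e.
  by exists c, p.
have [phi hphi] := choice H1.
have key : forall q, kappa' q = act (kappa q) (phi (pi q)).
  move=> q; have [p [hpx hp]] := hphi (pi q).
  have [d hd] := act_trans hb hpx; subst q.
  by rewrite keq k'eq hp !(actM hb) cmulC.
exists phi; split => // x.
have [U [oU Ux [s [psi [cs spi _ _ _]]]]] := triv x.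
have [U' [oU' Ux' [s' [psi' [_ _ cpsi' hs' hpsi']]]]] := triv (gamma x).
pose V := U `&` gamma @^-1` U'.
have oV : open V by apply: openI => //; move/continuousP: hgc; apply.
have Vx : V x by [].
pose L y := cmul (cinv (psi' (kappa (s y)))) (psi' (kappa' (s y))).
have eqL : forall y, V y -> L y = phi y.
  move=> y [Uy U'y]; rewrite /L.
  have py : pi (s y) = y by apply: spi.
  have U'k : U' (pi (kappa (s y))) by rewrite kpi py.
  have e1 := hs' _ U'k.
  have e2 : psi' (kappa' (s y)) = cmul (psi' (kappa (s y))) (phi y).
    by rewrite key py -{1}e1 (actM hb) hpsi'.
  by rewrite e2 cmulA cmulVz cmul1z.
have cL : {for x, continuous L}.
  have csx : {for x, continuous s}.
    by move: cs; rewrite continuous_open_subspace // => /(_ x (mem_set Ux)).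
  have opU' : open (pi @^-1` U') by move/continuousP: cpi; apply.
  have cpsi'' := cpsi'; rewrite continuous_open_subspace // in cpsi''.
  have c1 : {for x, continuous (fun y => psi' (kappa (s y)))}.
    apply: (@continuous_comp _ _ _ (fun y => kappa (s y)) psi').
      exact: (@continuous_comp _ _ _ s kappa x csx (ck _)).
    by apply: cpsi''; apply: mem_set; rewrite /= kpi spi.
  have c2 : {for x, continuous (fun y => psi' (kappa' (s y)))}.
    have [[ck' _] _ _] := hk'.
    apply: (@continuous_comp _ _ _ (fun y => kappa' (s y)) psi').
      exact: (@continuous_comp _ _ _ s kappa' x csx (ck' _)).
    by apply: cpsi''; apply: mem_set; rewrite /= k'pi spi.
  rewrite /L; exact: (cmul_cont_at (cinv_cont_at c1) c2).
have nV : nbhs x V by apply: open_nbhs_nbhs; split.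
have nearE : {near x, L =1 phi} by apply: filterS nV => y Vy; exact: eqL.
apply: cvg_trans (near_eq_cvg nearE) _.
rewrite -(eqL x Vx); exact: cL.
Qed.

End Lift.

Lemma act1 (R : realType) (X P : topologicalType) (pi : P -> X) (act : P -> S1 R -> P) :
  principal_circle_bundle pi act -> forall p, act p (cone R) = p.
Proof. by case=> _ _ _ [h _ _] _. Qed.
Arguments act1 {R X P pi act}.

Lemma pi_iter (R : realType) (X P : topologicalType) (pi : P -> X) (act : P -> S1 R -> P)
  (gamma : X -> X) (kappa : P -> P) :
  bundle_aut_lifting pi act gamma kappa ->
  forall n p, pi (iter n kappa p) = iter n gamma (pi p).
Proof.
case=> _ _ kpi; elim=> [//|n IH] p /=; by rewrite kpi IH.
Qed.
Arguments pi_iter {R X P pi act gamma kappa}.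

Lemma iter_kappa' (R : realType) (X P : topologicalType) (pi : P -> X) (act : P -> S1 R -> P)
  (gamma : X -> X) (kappa kappa' : P -> P) (phi : X -> S1 R) :
  principal_circle_bundle pi act ->
  bundle_aut_lifting pi act gamma kappa ->
  bundle_aut_lifting pi act gamma kappa' ->
  (forall q, kappa' q = act (kappa q) (phi (pi q))) ->
  forall n p, iter n kappa' p = act (iter n kappa p) (prodS (fun i => phi (iter i gamma (pi p))) n).
Proof.
move=> hb hk hk' key; have [_ k'eq _] := hk'.
elim=> [|n IH] p /=; first by rewrite (act1 hb).
by rewrite IH k'eq key (actM hb) (pi_iter hk).
Qed.

Lemma within_comp (T U : topologicalType) (A : set T) (m : T -> T) (F : T -> U) :
  continuous m -> (forall z, A z -> A (m z)) -> {within A, continuous F} ->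
  {within A, continuous (fun z => F (m z))}.
Proof.
move=> cm mA cF; apply/subspace_continuousP => x Ax.
move/subspace_continuousP: cF => /(_ (m x) (mA x Ax)) cF.
move=> W /cF; rewrite /within /= => hW.
have := cm x _ hW; rewrite /= /nbhs /=.
apply: filterS => y /= hy Ay; exact: hy (mA y Ay).
Qed.

Lemma cont_fst_glob (X : topologicalType) (R : realType) (F : X -> S1 R) :
  continuous F -> continuous (fun z : X * R => F z.1).
Proof. move=> cF z; apply: (@continuous_comp _ _ _ fst F); [exact: cvg_fst|exact: cF]. Qed.

Lemma iter_cont (X : topologicalType) (gamma : X -> X) n :
  continuous gamma -> continuous (iter n gamma).
Proof.
move=> cg; elim: n => [|n IH] /=; first by move=> x U.
move=> x; apply: (@continuous_comp _ _ _ (iter n gamma) gamma); [exact: IH|exact: cg].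
Qed.

Lemma homot_prod (R : realType) (X : topologicalType) (gamma : X -> X) (g : X -> S1 R) r :
  continuous gamma -> continuous g -> homotopic R (g \o gamma) g ->
  homotopic R (fun x => prodS (fun i => g (iter i gamma x)) r) (fun x => cpow (g x) r).
Proof.
move=> cgam cg [H [cH [H0 H1]]].
pose Q n x t := prodS (fun j => cmul (H (iter j gamma x) t) (cinv (g (iter j gamma x)))) n.
pose K x t := prodS (fun n => cmul (g x) (Q n x t)) r.
exists K; split; [|split].
- set A := [set z : X * R | 0 <= z.2 <= 1].
  apply: (@prodS_cont R (subspace A) (fun n z => cmul (g z.1) (Q n z.1 z.2)) r) => n.
  apply: cmul_cont; first exact/continuous_subspaceT/cont_fst_glob.
  apply: (@prodS_cont R (subspace A)
    (fun j z => cmul (H (iter j gamma z.1) z.2) (cinv (g (iter j gamma z.1)))) n) => j.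
  apply: cmul_cont.
    apply: (@within_comp _ _ A (fun z => (iter j gamma z.1, z.2)) (fun z => H z.1 z.2)) => //.
    move=> z.
    have c1 : {for z, continuous (fun z : X * R => iter j gamma z.1)}.
      apply: (@continuous_comp _ _ _ fst (iter j gamma)); [exact: cvg_fst|exact: iter_cont].
    have c2 : {for z, continuous (fun z : X * R => z.2)} by exact: cvg_snd.
    exact: (cvg_pair c1 c2).
  apply/continuous_subspaceT/cinv_cont.
  apply: (@cont_fst_glob X R (fun y => g (iter j gamma y))) => x.
  apply: (@continuous_comp _ _ _ (iter j gamma) g); [exact: iter_cont|exact: cg].
- move=> x; rewrite /K; apply: eq_prodS => n _.
  have -> : Q n x 0 = cmul (g (iter n gamma x)) (cinv (g x)).
    rewrite /Q; elim: n => [|n IH] /=; first by rewrite cmulzV.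
    rewrite IH H0 /= -cmulA (cmulA (cinv _)) cmulVz cmul1z //.
  by rewrite (cmulC (g (iter n gamma x))) cmulA cmulzV cmul1z.
- move=> x; rewrite /K -prodS_cst; apply: eq_prodS => n _.
  have -> : Q n x 1 = cone R.
    rewrite /Q; elim: n => [|n IH] //=.
    by rewrite IH H1 cmulzV cmul1z.
  by rewrite cmulz1.
Qed.

Theorem lemma5p1 (R : realType) (X P : topologicalType)
  (pi : P -> X) (act : P -> S1 R -> P) (gamma : X -> X) (r : nat)
  (kappa kappa' : P -> P) (h h' : X -> S1 R) :
  closed_connected_manifold R X ->
  principal_circle_bundle pi act ->
  homeomorphism gamma ->
  (0 < r)%N ->
  iter r gamma = id ->
  (forall k : nat, (0 < k < r)%N -> iter k gamma <> id) ->
  (forall f : X -> S1 R, continuous f -> homotopic R (f \o gamma) f) ->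
  pullback_iso pi act gamma ->
  bundle_aut_lifting pi act gamma kappa ->
  bundle_aut_lifting pi act gamma kappa' ->
  (* h = h_{kappa^r}, h' = h_{kappa'^r}: the continuous maps with
     kappa^r(p) = p . h(pi p) *)
  continuous h -> (forall p, iter r kappa p = act p (h (pi p))) ->
  continuous h' -> (forall p, iter r kappa' p = act p (h' (pi p))) ->
  (* [h] - [h'] lies in r H^1(X;Z), i.e. [h] (x) 1 = [h'] (x) 1 in H^1 (x) Z/r *)
  exists g : X -> S1 R, continuous g /\
    homotopic R (fun x => cmul (h x) (cinv (h' x))) (fun x => cpow (g x) r).
Proof.
move=> _ hb [cgam _] _ _ _ hhom _ hk hk' _ hh _ hh'.
have [phi [cphi key]] := @exists_phi R X P pi act gamma kappa kappa' hb cgam hk hk'.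
pose g x := cinv (phi x).
have cg : continuous g := cinv_cont cphi.
exists g; split => //.
have eqh : (fun x => cmul (h x) (cinv (h' x))) =
           (fun x => prodS (fun i => g (iter i gamma x)) r).
  apply: funext => x; have [cpi surj _ _ _] := hb; have [p hp] := surj x.
  have e : act p (h' x) = act p (cmul (h x) (prodS (fun i => phi (iter i gamma x)) r)).
    by rewrite -hp -hh' (@iter_kappa' R X P pi act gamma kappa kappa' phi hb hk hk' key) hh (actM hb).
  rewrite (act_free hb e) cinvM cmulA cmulzV cmul1z prodS_cinv //.
rewrite eqh; apply: homot_prod => //; exact: hhom.
Qed.
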